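(* Let $f:A\to B$ be a surjective homomorphism of $K$-algebras, let $\mathcal{F}=\{V_n\}$ be a filtration of $A$ and let $\mathcal{G}=\{f(V_n)\}$ be the induced filtration of $B$. Then $\mathrm{h}_{\mathrm{alg}}(B,\mathcal{G})\le\mathrm{h}_{\mathrm{alg}}(A,\mathcal{F})$. In particular, for a finite directed graph $E$, $\mathrm{h}_{\mathrm{alg}}(L_K(E))\le\mathrm{h}_{\mathrm{alg}}(K\hat E)$, both with their standard filtrations.
   Context: A filtration of $A$ is a family $\{V_n\}_{n\ge0}$ of subspaces with $V_0\subseteq V_1\subseteq\cdots$, $A=\bigcup_nV_n$, $V_nV_m\subseteq V_{n+m}$, with finite-dimensional quotients $V_n/V_{n-1}$. $\mathrm{h}_{\mathrm{alg}}(A,\mathcal{F})=0$ if $A$ is finite-dimensional and otherwise $\limsup_n\frac1n\log\dim(V_n/V_{n-1})$. For a finite directed graph $E=(E^0,E^1,s,r)$, the extended graph $\hat E$ has vertices $E^0$ and edges $E^1\cup\{e^*:e\in E^1\}$ with $s(e^* )=r(e)$, $r(e^* )=s(e)$. The path algebra $KF$ of a graph $F$ has basis the paths of $F$ (vertices as length-0 paths) with concatenation product; its standard filtration is the span of paths of length $\le n$. The Leavitt path algebra $L_K(E)$ is the quotient of $K\hat E$ by the relations $e^*f=\delta_{e,f}r(e)$ ($e,f\in E^1$) and $\sum_{s(e)=v}ee^*=v$ for each vertex $v$ with $0<|s^{-1}(v)|<\infty$; its standard filtration is the span of $\lambda\mu^*$ with $\lambda,\mu$ paths of $E$ and $l(\lambda)+l(\mu)\le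 n$ (which is the image of the standard filtration of $K\hat E$). *)

(* Defs.v *)
From HB Require Import structures.
From mathcomp Require Import all_boot all_algebra.
From mathcomp.multinomials Require Import monalg.
From mathcomp Require Import classical_sets boolp reals ereal sequences exp.

Set Implicit Arguments.
Unset Strict Implicit.
Unset Printing Implicit Defensive.

Import GRing.Theory.
Local Open Scope classical_set_scope.
Local Open Scope ring_scope.

Section Generic.
Variables (K : fieldType) (A : lmodType K).

Definition subspace (V : set A) : Prop :=
  V 0 /\ forall (a : K) (x y : A), V x -> V y -> V (a *: x + y).

Definition is_algebra (mul : A -> A -> A) : Prop :=
  associative mul /\
  (forall x y z, mul (x + y) z = mul x z + mul y z) /\
  (forall x y z, mul x (y + z) = mul x y + mul x z) /\
  (forall (a : K) x y, mul (a *: x) y = a *: mul x y /\ mul x (a *: y) = a *: mul x y).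

(* s is a list of vectors of V spanning V modulo W, i.e. whose classes
   span the quotient V/W *)
Definition spans_mod (W V : set A) (s : seq A) : Prop :=
  (forall i, (i < size s)%N -> V s`_i) /\
  forall v, V v -> exists c : 'I_(size s) -> K,
      W (v - \sum_(i < size s) c i *: s`_i).

Definition fin_dim_quot (W V : set A) : Prop := exists s, spans_mod W V s.

(* dim (V/W): the least size of a spanning family of V/W
   (set to 0 if V/W is not finite dimensional; never used in that case) *)
Definition qdim (W V : set A) : nat :=
  match pselect (exists n, `[< exists s, size s = n /\ spans_mod W V s >]) with
  | left H => ex_minn H
  | right _ => 0%N
  end.

Definition fin_dim_space : Prop := fin_dim_quot [set 0] setT.

Definition prevV (V : nat -> set A) (n : nat) : set A :=
  if n is m.+1 then V m else [set 0].

Definition is_filtration (mul : A -> A -> A) (V : nat -> set A) : Prop :=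
  (forall n, subspace (V n)) /\
  (forall n, V n `<=` V n.+1) /\
  (forall x, exists n, V n x) /\
  (forall n m x y, V n x -> V m y -> V (n + m)%N (mul x y)) /\
  (forall n, fin_dim_quot (prevV V n) (V n)).

Definition quot_dim (V : nat -> set A) (n : nat) : nat := qdim (prevV V n) (V n).

Definition h_alg (R : realType) (V : nat -> set A) : \bar R :=
  if `[< fin_dim_space >] then 0%E
  else limn_esup (fun n => let d := quot_dim V n in
                   if d == 0%N then -oo%E
                   else ((ln (d%:R : R)) / n%:R)%:E).

Definition is_ideal (mul : A -> A -> A) (J : set A) : Prop :=
  subspace J /\ forall x y, J y -> J (mul x y) /\ J (mul y x).

Definition gen_ideal (mul : A -> A -> A) (S : set A) : set A :=
  [set x | forall J, is_ideal mul J -> S `<=` J -> J x].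

End Generic.

Section Graph.
Variables (K : fieldType) (E0 E1 : finType) (src rng : E1 -> E0).

(* edges of \hat E : inl e = e, inr e = e^* *)
Definition hedge : Type := (E1 + E1)%type.
Definition hsrc (x : hedge) : E0 :=
  match x with inl e => src e | inr e => rng e end.
Definition hrng (x : hedge) : E0 :=
  match x with inl e => rng e | inr e => src e end.

(* a path of \hat E: start vertex v and edge list; length-0 paths are
   the vertices *)
Definition is_hpath (p : E0 * seq hedge) : bool :=
  (if p.2 is x :: _ then hsrc x == p.1 else true) &&
  sorted (fun x y => hrng x == hsrc y) p.2.

Definition hpath : Type := {p : E0 * seq hedge | is_hpath p}.
HB.instance Definition _ := Choice.on hpath.

Definition hp_src (p : hpath) : E0 := (val p).1.
Definition hp_rng (p : hpath) : E0 :=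
  if (val p).2 is x :: s then hrng (last x s) else (val p).1.
Definition hp_len (p : hpath) : nat := size (val p).2.

Definition PA := monalg.malg hpath K.

Definition bas (p : hpath) : PA := monalg.mkmalgU p (1 : K).

Definition hp_cat (p q : hpath) : PA :=
  if hp_rng p == hp_src q then
    (if insub ((val p).1, (val p).2 ++ (val q).2) is Some u then bas u else 0)
  else 0.

Definition pa_mul (x y : PA) : PA :=
  \sum_(p <- finmap.enum_fset (monalg.msupp x)) \sum_(q <- finmap.enum_fset (monalg.msupp y))
     (monalg.mcoeff p x * monalg.mcoeff q y) *: hp_cat p q.

Definition std_filt (n : nat) : set PA :=
  [set x | exists (s : seq hpath) (c : hpath -> K),
     all (fun p => (hp_len p <= n)%N) s /\ x = \sum_(p <- s) c p *: bas p].

Definition vtx (v : E0) : PA :=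
  if insub (v, [::] : seq hedge) is Some u then bas u else 0.
Definition hed (x : hedge) : PA :=
  if insub (hsrc x, [:: x]) is Some u then bas u else 0.

Definition ck1 (e f : E1) : PA :=
  pa_mul (hed (inr e)) (hed (inl f)) - (if e == f then vtx (rng e) else 0).
Definition ck2 (v : E0) : PA :=
  \sum_(e | src e == v) pa_mul (hed (inl e)) (hed (inr e)) - vtx v.

Definition leavitt_rels : set PA :=
  [set x | (exists e f, x = ck1 e f) \/
           (exists v, [exists e, src e == v] /\ x = ck2 v)].

(* the kernel of K \hat E -> L_K(E) *)
Definition leavitt_ideal : set PA := gen_ideal pa_mul leavitt_rels.

End Graph.

(* Main.v *)
Require Import Defs.
From HB Require Import structures.
From mathcomp Require Import all_boot all_algebra.
From mathcomp.multinomials Require Import monalg.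
From mathcomp Require Import classical_sets boolp reals ereal sequences exp.
From mathcomp Require Import all_order topology normedtype.

Set Implicit Arguments.
Unset Strict Implicit.
Unset Printing Implicit Defensive.
Import GRing.Theory Num.Theory Order.TTheory.
Local Open Scope classical_set_scope.
Local Open Scope ring_scope.


Section Gen.
Variables (K : fieldType) (A : lmodType K).

Lemma spans_modP (W V : set A) s : spans_mod W V s <->
  (forall i, (i < size s)%N -> V s`_i) /\
  (forall v, V v -> exists c : nat -> K,
      W (v - \sum_(0 <= i < size s) c i *: s`_i)).
Proof.
split=> -[H1 H2]; split=> // v Vv.
  have [c Hc] := H2 v Vv.
  exists (fun k => if insub k is Some j then c j else 0).
  rewrite big_mkord; congr (W (_ - _)): Hc; apply: eq_bigr => i _.
  by rewrite valK.
have [c Hc] := H2 v Vv.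
by exists (fun i => c (val i)); rewrite big_mkord in Hc.
Qed.

Lemma spans_weak (W W' V V' : set A) s : spans_mod W V s -> W `<=` W' ->
  V' `<=` V -> (forall i, (i < size s)%N -> V' s`_i) -> spans_mod W' V' s.
Proof.
move=> [_ H2] WW VV H; split=> // v /VV Vv.
by have [c Hc] := H2 v Vv; exists c; apply: WW.
Qed.

Lemma qdim_le (W V : set A) s : spans_mod W V s -> (qdim W V <= size s)%N.
Proof.
move=> Hs; rewrite /qdim; case: pselect => [H|H] //.
case: ex_minnP => m _ Hm; apply: Hm; apply/asboolP; by exists s.
Qed.

Lemma qdim_spec (W V : set A) : fin_dim_quot W V ->
  exists s, spans_mod W V s /\ qdim W V = size s.
Proof.
move=> [s Hs]; rewrite /qdim; case: pselect => [H|H]; last first.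
  by exfalso; apply: H; exists (size s); apply/asboolP; exists s.
case: ex_minnP => m /asboolP [t [Ht1 Ht2]] _; exists t; split => //.
Qed.

Lemma qdim0 (W V : set A) : fin_dim_quot W V -> qdim W V = 0%N -> V `<=` W.
Proof.
move=> /qdim_spec [s [[_ Hs] ->]] s0 v Vv.
have [c] := Hs v Vv; rewrite big1 ?subr0 //.
by move=> i _; have := ltn_ord i; move: (nat_of_ord i); rewrite s0.
Qed.

Lemma spans_cat (U V : set A) s t : spans_mod [set 0] U s -> spans_mod U V t ->
  U `<=` V -> spans_mod [set 0] V (s ++ t).
Proof.
move=> /spans_modP [Hs1 Hs2] /spans_modP [Ht1 Ht2] UV; apply/spans_modP; split.
  move=> i; rewrite size_cat nth_cat; case: ifP => [lt _|/negbT]; first by apply/UV/Hs1.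
  rewrite -leqNgt => le lt; apply: Ht1; by rewrite ltn_subLR.
move=> v Vv; have [c Hc] := Ht2 v Vv; have [d Hd] := Hs2 _ Hc.
exists (fun i => if (i < size s)%N then d i else c (i - size s)%N).
rewrite size_cat (@big_cat_nat _ _ _ (size s)) //=; last by rewrite leq_addr.
rewrite (big_addn 0 (size s + size t) (size s)) addKn /=.
have -> : \sum_(0 <= i < size s) (if (i < size s)%N then d i else c (i - size s)%N)
   *: (s ++ t)`_i = \sum_(0 <= i < size s) d i *: s`_i.
  by apply: eq_big_nat => i /andP [_ lt]; rewrite lt nth_cat lt.
have -> : \sum_(0 <= i < size t) (if (i + size s < size s)%N then d (i + size s)%N
   else c (i + size s - size s)%N) *: (s ++ t)`_(i + size s) =
   \sum_(0 <= i < size t) c i *: t`_i.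
  apply: eq_big_nat => i _; rewrite nth_cat.
  by rewrite ltnNge leq_addl /= addnK.
by rewrite /= opprD addrA addrAC.
Qed.

Lemma mono_add (V : nat -> set A) : (forall n, V n `<=` V n.+1) ->
  forall m k, V m `<=` V (m + k)%N.
Proof.
move=> H m; elim=> [|k IH]; first by rewrite addn0.
by rewrite addnS; apply: subset_trans IH (H _).
Qed.

Lemma findim_all (V : nat -> set A) : (forall n, V n `<=` V n.+1) ->
  (forall n, fin_dim_quot (prevV V n) (V n)) ->
  forall n, fin_dim_quot [set 0] (V n).
Proof.
move=> Hm Hf; elim=> [|n [s Hs]]; first exact: Hf.
have [t Ht] := Hf n.+1; exists (s ++ t); exact: spans_cat Hs Ht (Hm n).
Qed.

Lemma not_findim (V : nat -> set A) : (forall n, V n `<=` V n.+1) ->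
  (forall x, exists n, V n x) ->
  (forall n, fin_dim_quot (prevV V n) (V n)) ->
  ~ fin_dim_space A -> forall N, exists n, (N <= n)%N /\ quot_dim V n <> 0%N.
Proof.
move=> Hm He Hf Hnf N; apply: contrapT => Hc; apply: Hnf.
have H0 : forall n, (N < n)%N -> V n `<=` V n.-1.
  move=> n Nn; have := qdim0 (Hf n); case: n Nn => // n Nn; apply.
  apply: contrapT => Hq; apply: Hc; exists n.+1; split => //; exact: ltnW.
have HN : forall k, V (N + k)%N `<=` V N.
  elim=> [|k IH]; first by rewrite addn0.
  by apply: subset_trans IH; rewrite addnS; apply: H0; rewrite ltnS leq_addr.
have [s Hs] := findim_all Hm Hf N; exists s.
apply: (spans_weak (W' := [set 0]) (V' := setT) Hs) => //.
move=> x _; have [n Vn] := He x; case: (leqP n N) => nN.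
  by have := @mono_add V Hm n (N - n)%N x Vn; rewrite subnKC.
by apply: (HN (n - N)%N x); rewrite subnKC // ltnW.
Qed.

End Gen.


Lemma le_limn_esup_pw (R : realType) (u v : (\bar R)^nat) :
  (forall n, (u n <= v n)%E) -> (limn_esup u <= limn_esup v)%E.
Proof.
move=> uv; rewrite !limn_esup_lim; apply: lee_lim;
  [exact: is_cvg_esups|exact: is_cvg_esups|].
apply: nearW => n; apply: ge_ereal_sup => _ [k /= nk <-].
apply: le_trans (uv k) _; apply: ereal_sup_ubound; by exists k.
Qed.

Lemma limn_esup_ge0 (R : realType) (u : (\bar R)^nat) :
  (forall N, exists n, (N <= n)%N /\ (0 <= u n)%E) -> (0 <= limn_esup u)%E.
Proof.
move=> H; rewrite limn_esup_lim; apply: lime_ge; first exact: is_cvg_esups.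
apply: nearW => N; have [n [Nn un]] := H N.
apply: le_ereal_sup_tmp; exists (u n) => //; by exists n.
Qed.

Definition gfun (R : realType) (n d : nat) : \bar R :=
  if d == 0%N then -oo%E else ((ln (d%:R : R)) / n%:R)%:E.

Lemma gfun_mono (R : realType) n d1 d2 : (d1 <= d2)%N ->
  (gfun R n d1 <= gfun R n d2)%E.
Proof.
rewrite /gfun => le; case: eqP => [_|/eqP d10]; first by rewrite leNye.
have d20 : d2 != 0%N by rewrite -lt0n (leq_trans _ le) // lt0n.
rewrite (negbTE d20) lee_fin ler_wpM2r // ?invr_ge0 //.
by rewrite ler_ln ?posrE ?ltr0n ?lt0n // ler_nat.
Qed.

Lemma gfun_ge0 (R : realType) n d : d != 0%N -> (0 <= gfun R n d)%E.
Proof.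
move=> d0; rewrite /gfun (negbTE d0) lee_fin.
apply: divr_ge0 => //; apply: ln_ge0.
by rewrite ler1n lt0n.
Qed.

Lemma h_algE (R : realType) (K : fieldType) (A : lmodType K) (V : nat -> set A) :
  h_alg R V = if `[< fin_dim_space A >] then 0%E
              else limn_esup (fun n => gfun R n (quot_dim V n)).
Proof. by []. Qed.

Lemma main_gen (R : realType) (K : fieldType) (A B : lmodType K)
  (f : {linear A -> B}) (V : nat -> set A) :
  (forall y, exists x, f x = y) ->
  (forall n, V n `<=` V n.+1) -> (forall x, exists n, V n x) ->
  (forall n, fin_dim_quot (prevV V n) (V n)) ->
  (h_alg R (fun n => f @` V n) <= h_alg R V)%E.
Proof.
move=> fsurj Hm He Hf.
have Hmap : forall (W U : set A) s, spans_mod W U s ->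
    spans_mod (f @` W) (f @` U) (map f s).
  move=> W U s /spans_modP [H1 H2]; apply/spans_modP; split.
    move=> i; rewrite size_map => lt; rewrite (nth_map 0) //.
    by exists s`_i => //; apply: H1.
  move=> _ [x Ux <-]; have [c Hc] := H2 x Ux; exists c.
  exists (x - \sum_(0 <= i < size s) c i *: s`_i) => //.
  rewrite linearB linear_sum size_map; congr (_ - _).
  by apply: eq_big_nat => i /andP [_ lt]; rewrite linearZ (nth_map 0).
have f0 : f @` [set 0] `<=` [set 0] by move=> _ [x -> <-]; rewrite linear0.
have Hprev : forall n, f @` prevV V n `<=` prevV (fun n => f @` V n) n.
  move=> [|n] /=; [exact: f0|by []].
rewrite !h_algE; case: ifPn => /asboolP HB; case: ifPn => /asboolP HA //.
- apply: limn_esup_ge0 => N.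
  have [n [Nn Hn]] := not_findim Hm He Hf HA N.
  by exists n; split => //; apply: gfun_ge0; apply/eqP.
- exfalso; apply: HB; case: HA => s Hs; exists (map f s).
  apply: spans_weak (Hmap _ _ _ Hs) f0 _ _ => //.
  by move=> y _; have [x <-] := fsurj y; exists x.
- apply: le_limn_esup_pw => n; apply: gfun_mono; rewrite /quot_dim.
  have [s [Hs ->]] := qdim_spec (Hf n).
  rewrite -(size_map f); apply: qdim_le.
  apply: spans_weak (Hmap _ _ _ Hs) (Hprev n) _ _ => //.
  move=> i; rewrite size_map => lt; rewrite (nth_map 0) //; exists s`_i => //; case: Hs => H1 _; exact: H1.
Qed.


Lemma regroup (K : fieldType) (T : eqType) (M : lmodType K) (g : T -> M)
  (c : T -> K) (s L : seq T) : uniq L -> all (mem L) s ->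
  \sum_(p <- s) c p *: g p = \sum_(q <- L) (\sum_(p <- s | p == q) c p) *: g q.
Proof.
move=> uL sL.
have -> : \sum_(q <- L) (\sum_(p <- s | p == q) c p) *: g q =
    \sum_(q <- L) \sum_(p <- s) (if p == q then c p *: g p else 0).
  apply: eq_bigr => q _; rewrite scaler_suml big_mkcond /=.
  by apply: eq_bigr => p _; case: eqP => [->|]; rewrite ?scale0r.
rewrite exchange_big /= big_seq [RHS]big_seq; apply: eq_bigr => p ps.
rewrite -big_mkcond /= -big_filter.
have -> : [seq i <- L | p == i] = [:: p].
  rewrite -(filter_pred1_uniq uL); last by have := allP sL p ps.
  by apply: eq_filter => q /=; rewrite eq_sym.
by rewrite big_seq1.
Qed.

Lemma seq_to_nat (K : fieldType) (T : Type) (M : lmodType K) (g : T -> M)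
  (G : T -> K) (L : seq T) : exists c : nat -> K,
  \sum_(q <- L) G q *: g q = \sum_(0 <= i < size (map g L)) c i *: (map g L)`_i.
Proof.
case: L => [|x0 L]; first by exists (fun _ => 0); rewrite big_nil big_geq.
exists (fun i => G (nth x0 (x0 :: L) i)); rewrite (big_nth x0) size_map.
by apply: eq_big_nat => i /andP [_ lt]; rewrite (nth_map x0).
Qed.

Section Graph2.
Variables (K : fieldType) (E0 E1 : finType) (src rng : E1 -> E0).

Local Notation PA := (@PA K E0 E1 src rng).
Local Notation hpath := (@hpath E0 E1 src rng).
Local Notation std_filt := (@std_filt K E0 E1 src rng).
Local Notation bas := (@bas K E0 E1 src rng).

Lemma std_mono n : std_filt n `<=` std_filt n.+1.
Proof.
move=> x [s [c [H ->]]]; exists s, c; split => //.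
by apply: sub_all H => p /leqW.
Qed.

Lemma t1 (p k : hpath) : (bas p)@_k = (1 : K) *+ (p == k).
Proof. exact: (mcoeffU p (1:K) k). Qed.
Lemma t3 c (p k : hpath) : (fgscale c (bas p))@_k = c * (bas p)@_k.
Proof. Timeout 20 (exact: fgscaleE). Qed.
Lemma t5 c (p : hpath) : (c *: bas p) = fgscale c (bas p).
Proof. Timeout 20 (by []). Qed.
Lemma t4 c (p k : hpath) : (<< c *g p >> : PA)@_k = c *+ (p == k).
Proof. Timeout 20 (exact: mcoeffU). Qed.
Lemma scale_bas c p : c *: bas p = << c *g p >>.
Proof.
have E : forall k, (fgscale c (bas p))@_k = (<< c *g p >> : PA)@_k.
  move=> k. Timeout 20 (apply: (eq_trans (t3 c p k)); apply: (eq_trans _ (esym (t4 c p k)))).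
  Timeout 20 (rewrite (t1 p k) mulr_natr). done.
Timeout 20 (change (fgscale c (bas p) = << c *g p >>)).
Timeout 30 (exact: (malgP (fgscale c (bas p)) (<< c *g p >>)).1 E).
Qed.
Lemma std_exh x : exists n, std_filt n x.
Proof.
exists (\max_(p <- finmap.enum_fset (msupp x)) hp_len p).
exists (finmap.enum_fset (msupp x)), (fun p => x@_p); split.
  by apply/allP => p ps; apply: (leq_bigmax_seq _ ps).
Timeout 30 (rewrite {1}[x]monalgE). Timeout 30 (apply: eq_bigr => p _). exact: esym (scale_bas _ _).
Qed.

Definition Lall n : seq hpath :=
  flatten [seq pmap insub [seq (v, tval t) | v <- enum E0, t <- enum {: k.-tuple (hedge E1)}]
          | k <- iota 0 n.+1].

Lemma mem_Lall n (p : hpath) : (hp_len p <= n)%N -> p \in Lall n.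
Proof.
move=> le; apply/flatten_mapP; exists (hp_len p).
  by rewrite mem_iota add0n ltnS.
rewrite mem_pmap_sub.
have -> : val p = ((val p).1, tval (in_tuple (val p).2)) by case: (val p).
by apply: allpairs_f; rewrite mem_enum.
Qed.

Lemma std_fin n : fin_dim_quot (prevV std_filt n) (std_filt n).
Proof.
pose L := undup [seq p <- Lall n | (hp_len p <= n)%N].
have HL p : (p \in L) = (hp_len p <= n)%N.
  rewrite mem_undup mem_filter; apply/andP/idP => [[]//|le]; split => //.
  exact: mem_Lall.
exists (map bas L); apply/spans_modP; split.
  move=> i; rewrite size_map => lt.
  case: L HL lt => [//|x0 L'] HL lt.
  rewrite (nth_map x0) //; exists [:: nth x0 (x0 :: L') i], (fun _ => 1).
  split; first by rewrite /= andbT -HL mem_nth.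
  by rewrite big_seq1 scale1r.
move=> v [s [c [Hs ->]]].
have [e He] := seq_to_nat bas (fun q => \sum_(p <- s | p == q) c p) L.
have Hall : all (mem L) s.
  by apply/allP => p ps; rewrite /= HL; exact: (allP Hs).
have E := regroup bas c (undup_uniq _) Hall.
exists e. Timeout 30 (rewrite E). Timeout 30 (rewrite He). rewrite subrr.
clear -Hs; case: n Hs => [//|n] _ /=.
by exists [::], (fun _ => 0); rewrite big_nil.
Qed.

End Graph2.

Theorem lemma4p1 :
  (forall (R : realType) (K : fieldType) (A B : lmodType K)
          (mulA : A -> A -> A) (mulB : B -> B -> B)
          (f : {linear A -> B}) (V : nat -> set A),
      is_algebra mulA -> is_algebra mulB ->
      (forall x y, f (mulA x y) = mulB (f x) (f y)) ->
      (forall y, exists x, f x = y) ->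
      is_filtration mulA V ->
      (h_alg R (fun n => f @` V n) <= h_alg R V)%E) /\
  (forall (R : realType) (K : fieldType) (E0 E1 : finType) (s r : E1 -> E0)
          (L : lmodType K) (mulL : L -> L -> L) (pi : {linear @PA K E0 E1 s r -> L}),
      is_algebra mulL ->
      (forall x y, pi (pa_mul x y) = mulL (pi x) (pi y)) ->
      (forall y, exists x, pi x = y) ->
      (forall x, pi x = 0 <-> @leavitt_ideal K E0 E1 s r x) ->
      (h_alg R (fun n => pi @` @std_filt K E0 E1 s r n) <= h_alg R (@std_filt K E0 E1 s r))%E).
Proof.
split.
  move=> R K A B mulA mulB f V _ _ _ fsurj [_ [Hm [He [_ Hf]]]].
  exact: main_gen.
move=> R K E0 E1 s r L mulL pi _ _ pisurj _.
apply: main_gen => //; [exact: std_mono|exact: std_exh|exact: std_fin].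
Qed.
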